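(* Let $R$ be a unital commutative Hausdorff topological ring with dense group of units, $E\in\mathrm{TopSMod}_R$, $\lambda\in\Lambda^\infty$ and $U\subset\underline E(\lambda)$ a subset. There exists an open subfunctor $\mathcal U\subset\underline E$ (of functors $\Lambda^\infty\to\mathrm{Top}$) with $\mathcal U(\lambda)=U$ if and only if $U$ is open in the DeWitt topology. Such a functor is unique, and it is given by $\mathcal U=\underline E_{U_R}$ where $U_R=\underline E(\varepsilon)(U)=\mathcal U(R)$.
   Context: $\lambda^n=R[\theta_1,\dots,\theta_n]$ and $\lambda^\infty=R[\theta_i:i\in\mathbb N]$ are Grassmann algebras on odd generators ($\lambda^n=\bigoplus_I R\theta_I$ with product topology, $\lambda^\infty$ with direct limit topology); $\Lambda^\infty$ is the category with objects the $\lambda^n$ ($n\in\mathbb N$, $\lambda^0=R$) and $\lambda^\infty$, morphisms the even unital $R$-algebra morphisms; $\varepsilon:\lambda\to R$ kills all $\theta_i$. $\mathrm{TopSMod}_R$: Hausdorff graded topological $R$-modules $E=E_0\oplus E_1$. $E\otimes\lambda^N=\prod_{|I|\le N}E\theta_I$ (product topology), $E\otimes\lambda^\infty=\varinjlim_N E\otimes\lambda^N$ in Top; $\underline E(\lambda)=(E\otimes\lambda)_0=E_0\otimes\lambda_0\oplus E_1\otimes\lambda_1$ with the subspace topology, and $\underline E(\varphi)=(\mathrm{id}\otimes\varphi)|_{\underline E(\lambda)}$, giving a functor $\underline E:\Lambda^\infty\to\mathrm{Top}$. A subfunctor $\mathcal U\subset\underline E$ satisfies $\mathcal U(\mu)\subset\underline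 E(\mu)$ for all $\mu$, with $\underline E(\varphi)$ mapping $\mathcal U(\mu)$ into $\mathcal U(\mu')$ and $\mathcal U(\varphi)$ the restriction; it is open if each $\mathcal U(\mu)$ is open in $\underline E(\mu)$. For open $V\subset E_0$, $\underline E_V$ is the subfunctor $\underline E_V(\mu)=\underline E(\varepsilon)^{-1}(V)$. The DeWitt topology on $\underline E(\lambda)$ is the coarsest topology making $\underline E(\varepsilon):\underline E(\lambda)\to E_0$ continuous. *)

(* Defs.v *)
From HB Require Import structures.
From mathcomp Require Import all_boot all_algebra.
From mathcomp Require Import finmap.
From mathcomp Require Import all_classical all_reals topology pseudometric_normed_Zmodule.

Set Implicit Arguments.
Unset Strict Implicit.
Unset Printing Implicit Defensive.

Import GRing.Theory.
Local Open Scope ring_scope.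
Local Open Scope classical_set_scope.

HB.structure Definition TopComRing :=
  {R of Topological R & GRing.ComPzRing R}.

HB.structure Definition TopLmod (R : pzRingType) :=
  {M of Topological M & GRing.Lmodule R M}.

Definition topological_ring (R : TopComRing.type) : Prop :=
  [/\ continuous (fun p : R * R => p.1 + p.2),
      continuous (fun x : R => - x) &
      continuous (fun p : R * R => p.1 * p.2)].

Definition topological_module (R : TopComRing.type) (M : TopLmod.type R) : Prop :=
  continuous (fun p : M * M => p.1 + p.2) /\
  continuous (fun p : R * M => p.1 *: p.2).

Definition units_of (R : TopComRing.type) : set R :=
  [set u | exists v, u * v = 1].

(* An object of Lambda^oo is encoded as  mu : option nat :            *)
(*   Some n  stands for lambda^n = R[theta_0, ..., theta_(n-1)]       *)
(*           (Some 0 is lambda^0 = R),                                *)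
(*   None    stands for lambda^oo = R[theta_i : i in nat].            *)
(* An element is a coefficient function  I |-> g I  on finite subsets *)
(* I of nat (g I is the coefficient of theta_I), with finite support, *)
(* and with support in the subsets of {0..n-1} for lambda^n.          *)

Definition obj := option nat.

Definition adm (mu : obj) (I : {fset nat}) : Prop :=
  match mu with Some n => forall i, i \in I -> (i < n)%N | None => True end.

Definition bounded_by {V : zmodType} (N : nat) (f : {fset nat} -> V) : Prop :=
  forall I, f I != 0 -> forall i, i \in I -> (i < N)%N.

Definition supported_in {V : zmodType} (mu : obj) (f : {fset nat} -> V) : Prop :=
  (exists N, bounded_by N f) /\ (forall I, f I != 0 -> adm mu I).

Section Grassmann.
Variable R : TopComRing.type.

Definition grass := {fset nat} -> R.

Definition in_lam (mu : obj) (g : grass) : Prop := supported_in mu g.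

Definition theta (I : {fset nat}) : grass := fun K => if K == I then 1 else 0.

Definition gadd (g h : grass) : grass := fun K => g K + h K.
Definition gscale (a : R) (g : grass) : grass := fun K => a * g K.

Definition ninv (I J : {fset nat}) : nat :=
  (\sum_(i <- I) count (fun j => (j < i)%N) J)%N.

(* theta_I theta_J = (-1)^(ninv I J) theta_(I u J) for disjoint I, J *)
Definition gmul (g h : grass) : grass := fun K =>
  \sum_(I <- fpowerset K)
     (-1) ^+ ninv I (fsetD K I) * g I * h (fsetD K I).

Definition gone : grass := theta fset0.

Definition even_el (g : grass) : Prop := forall I, odd #|` I| -> g I = 0.
Definition odd_el (g : grass) : Prop := forall I, ~~ odd #|` I| -> g I = 0.

Definition is_morph (mu mu' : obj) (phi : grass -> grass) : Prop :=
  [/\ forall g, in_lam mu g -> in_lam mu' (phi g),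
      forall a g h, in_lam mu g -> in_lam mu h ->
        phi (gadd (gscale a g) h) = gadd (gscale a (phi g)) (phi h),
      forall g h, in_lam mu g -> in_lam mu h ->
        phi (gmul g h) = gmul (phi g) (phi h),
      phi gone = gone &
      (forall g, in_lam mu g -> even_el g -> even_el (phi g)) /\
      (forall g, in_lam mu g -> odd_el g -> odd_el (phi g))].

Definition eps (g : grass) : grass :=
  fun K => if K == fset0 then g fset0 else 0.

End Grassmann.

(* The functor  E_ : Lambda^oo -> Top  for a graded module E=E0(+)E1. *)
(* Elements of E (x) lambda are coefficient functions                 *)
(*   x : {fset nat} -> E0 * E1   (x I = coefficient of theta_I).      *)

Section Functor.
Variables (R : TopComRing.type) (E0 E1 : TopLmod.type R).

Definition Eel := {fset nat} -> (E0 * E1)%type.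

Definition Etens (mu : obj) : set Eel := [set x | supported_in mu x].

(* the underlying set of  E_(mu) = (E (x) mu)_0 = E0 (x) mu_0 (+) E1 (x) mu_1 *)
Definition Eobj (mu : obj) : set Eel :=
  [set x | Etens mu x /\
     (forall I, if odd #|` I| then (x I).1 = 0 else (x I).2 = 0)].

(* product topology on E (x) lambda^N = prod_{I subset {0..N-1}} E theta_I *)
Definition open_tensN (N : nat) (A : set Eel) : Prop :=
  A `<=` Etens (Some N) /\
  forall x, A x -> exists W : {fset nat} -> set (E0 * E1)%type,
    (forall I, adm (Some N) I -> open (W I) /\ W I (x I)) /\
    (forall y, Etens (Some N) y -> (forall I, adm (Some N) I -> W I (y I)) -> A y).

(* topology on E (x) mu: product topology for lambda^N, direct-limit
   (final) topology for lambda^oo = colim_N lambda^N *)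
Definition open_tens (mu : obj) (A : set Eel) : Prop :=
  match mu with
  | Some N => open_tensN N A
  | None => A `<=` Etens None /\
            forall N, open_tensN N (A `&` Etens (Some N))
  end.

Definition open_E (mu : obj) (B : set Eel) : Prop :=
  exists A, open_tens mu A /\ B = A `&` Eobj mu.

Definition sbound (x : Eel) : nat := xget 0%N [set N | bounded_by N x].

(* E_(phi) = (id (x) phi) restricted to E_(mu):
   sum_I x_I theta_I |-> sum_I x_I phi(theta_I) *)
Definition Emap (phi : grass R -> grass R) (x : Eel) : Eel := fun J =>
  \sum_(I <- fpowerset (seq_fset tt (iota 0 (sbound x))))
      phi (theta R I) J *: x I.

Definition subfunctor (U : obj -> set Eel) : Prop :=
  (forall mu, U mu `<=` Eobj mu) /\
  (forall mu mu' phi, is_morph mu mu' phi ->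
     forall x, U mu x -> U mu' (Emap phi x)).

Definition open_subfunctor (U : obj -> set Eel) : Prop :=
  subfunctor U /\ forall mu, open_E mu (U mu).

Definition Eeps : Eel -> Eel := Emap (@eps R).

Definition Esub (V : set Eel) : obj -> set Eel :=
  fun mu => Eobj mu `&` (Eeps @^-1` V).

(* DeWitt topology on E_(mu): the coarsest topology making
   E(eps) : E_(mu) -> E_(R) continuous, i.e. its open sets are the
   preimages of the open subsets of E_(R). *)
Definition dewitt_open (mu : obj) (U : set Eel) : Prop :=
  exists V, open_E (Some 0%N) V /\ U = Eobj mu `&` (Eeps @^-1` V).

End Functor.

(* Main.v *)
Require Import Defs.
From HB Require Import structures.
From mathcomp Require Import all_boot all_algebra.
From mathcomp Require Import finmap.
From mathcomp Require Import all_classical all_reals topology pseudometric_normed_Zmodule.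

Set Implicit Arguments.
Unset Strict Implicit.
Unset Printing Implicit Defensive.
Import GRing.Theory.
Local Open Scope ring_scope.
Local Open Scope classical_set_scope.

Lemma sum_single (T : eqType) (V : zmodType) (s : seq T) (a : T) (F : T -> V) :
  uniq s -> (forall C, C \in s -> C != a -> F C = 0) ->
  \sum_(C <- s) F C = if a \in s then F a else 0.
Proof.
move=> us H; case: ifP => ain.
  rewrite (bigD1_seq a) //= big1_seq ?addr0 // => C /andP[ne Cs]; exact: H.
rewrite big1_seq // => C /andP[_ Cs]; apply: H => //.
by apply/eqP => e; move: ain; rewrite -e Cs.
Qed.

Section G.
Variable R : TopComRing.type.

Lemma gmul0 (g h : grass R) : gmul g h fset0 = g fset0 * h fset0.
Proof.
rewrite /gmul (sum_single (a := fset0)) ?fset_uniq //.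
  rewrite fpowersetE fsub0set fsetD0 /ninv big_seq_fset0 expr0 mul1r //.
move=> C; rewrite fpowersetE => C0 CN; exfalso; move: CN.
by rewrite eqEfsubset C0 fsub0set.
Qed.

Definition phit (t : R) (g : grass R) : grass R := fun K => t ^+ #|` K| * g K.


Lemma in_lam_theta mu I N : adm mu I -> (forall i, i \in I -> (i < N)%N) ->
  in_lam mu (theta R I).
Proof.
move=> aI hN; split.
  exists N => K; rewrite /theta; case: (K =P I) => [-> _ //|]; by rewrite eqxx.
by move=> K; rewrite /theta; case: (K =P I) => [-> //|]; rewrite eqxx.
Qed.

Lemma in_lam_scale mu a (g : grass R) : in_lam mu g -> in_lam mu (gscale a g).
Proof.
move=> [[N hN] hA]; split.
  exists N => K; rewrite /gscale => H; apply: hN; apply/eqP => e.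
  by move: H; rewrite e mulr0 eqxx.
by move=> K H; apply: hA; apply/eqP => e; move: H; rewrite /gscale e mulr0 eqxx.
Qed.

Lemma sign_sq n : (-1) ^+ n * (-1) ^+ n = 1 :> R.
Proof. by rewrite -exprD addnn -mul2n exprM sqrrN expr1n expr1n. Qed.

Lemma gmul_theta (I : {fset nat}) i : i \in I ->
  gmul (gscale ((-1) ^+ ninv [fset i]%fset (I `\ i)%fset) (theta R [fset i]%fset))
       (theta R (I `\ i)%fset) = theta R I.
Proof.
move=> iI; apply/funext => K; rewrite /gmul (sum_single (a := [fset i]%fset)) ?fset_uniq //; last first.
  by move=> C _ CN; rewrite /gscale /theta (negbTE CN) !mulr0 mul0r.
rewrite /gscale /theta eqxx mulr1 fpowersetE fsub1set.
have [KI|KI] := eqVneq K I.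
  by rewrite KI iI eqxx mulr1 sign_sq.
case: ifP => iK //; case: eqP => [e|]; last by rewrite mulr0.
exfalso; move/eqP: KI; apply; apply/fsetP => x.
have [->|xi] := eqVneq x i; first by rewrite iK iI.
by move/fsetP: e => /(_ x); rewrite !in_fsetD1 xi.
Qed.


Lemma morph_eps mu : is_morph mu (Some 0%N) (@eps R).
Proof.
split.
- move=> g _; split.
    exists 0%N => K; rewrite /eps; case: (K =P fset0) => [-> _ i|]; by rewrite ?in_fset0 ?eqxx.
  move=> K; rewrite /eps; case: (K =P fset0) => [-> _ i|]; by rewrite ?in_fset0 ?eqxx.
- by move=> a g h _ _; apply/funext => K; rewrite /eps /gadd /gscale; case: ifP; rewrite ?mulr0 ?addr0.
- move=> g h _ _; apply/funext => K; rewrite /eps; case: (K =P fset0) => [->|K0].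
    by rewrite !gmul0 /eps eqxx.
  rewrite /gmul big1_seq // => C /andP[_]; rewrite fpowersetE => CK.
  case: (C =P fset0) => [C0|CN]; last by rewrite !mulr0 mul0r.
  by rewrite C0 fsetD0; case: (K =P fset0) => // _; rewrite mulr0.
- by apply/funext => K; rewrite /eps /gone /theta; case: (K =P fset0) => // ->.
split.
  move=> g _ _ K oK; rewrite /eps; case: ifP => // /eqP K0; move: oK; by rewrite K0 cardfs0.
move=> g _ og K oK; rewrite /eps; case: ifP => // /eqP K0; apply: og; by rewrite cardfs0.
Qed.

Lemma morph_id mu : is_morph (Some 0%N) mu (@id (grass R)).
Proof.
split => //.
move=> g [[N hN] hA]; split; first by exists N.
move=> K /hA aK; case: mu => [n|] //= i iK; by move: (aK i iK).
Qed.

Lemma aux4 (a b s x y : R) : a * b * (s * x * y) = s * (a * x) * (b * y).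
Proof.
by rewrite -!mulrA (mulrCA b s) (mulrCA a s) (mulrCA b x).
Qed.

Lemma morph_phit mu t : is_morph mu mu (phit t).
Proof.
split.
- move=> g [[N hN] hA]; split.
    exists N => K H; apply: hN; apply/eqP => e; move: H; by rewrite /phit e mulr0 eqxx.
  move=> K H; apply: hA; apply/eqP => e; move: H; by rewrite /phit e mulr0 eqxx.
- move=> a g h _ _; apply/funext => K; rewrite /phit /gadd /gscale.
  by rewrite mulrDr mulrCA.
- move=> g h _ _; apply/funext => K; rewrite /phit /gmul mulr_sumr.
  apply: eq_big_seq => C; rewrite fpowersetE => CK.
  have e : #|` K| = (#|` C| + #|` (K `\` C)%fset|)%N.
    by rewrite cardfsDS // subnKC // fsubset_leq_card.
  rewrite e exprD; exact: aux4.
- apply/funext => K; rewrite /phit /gone /theta; case: (K =P fset0) => [->|]; by rewrite ?mulr0 ?cardfs0 ?expr0 ?mulr1.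
split.
  by move=> g _ eg K oK; rewrite /phit eg // mulr0.
by move=> g _ og K oK; rewrite /phit og // mulr0.
Qed.


Lemma adm_sub mu (A I : {fset nat}) : (A `<=` I)%fset -> adm mu I -> adm mu A.
Proof. by case: mu => [n|] //= /fsubsetP AI aI i /AI /aI. Qed.

Lemma eps_phi_theta mu mu' phi (I : {fset nat}) N : is_morph mu mu' phi ->
  adm mu I -> (forall i, i \in I -> (i < N)%N) ->
  phi (theta R I) fset0 = if I == fset0 then 1 else 0.
Proof.
move=> [_ _ hm hone [_ hodd]] aI hN.
case: (I =P fset0) => [->|/eqP IN].
  by rewrite -/(gone R) hone /gone /theta eqxx.
have [i iI] := fset0Pn _ IN.
have hsub : forall A, (A `<=` I)%fset -> in_lam mu (theta R A).
  move=> A AI; apply: (in_lam_theta (N := N)); first exact: adm_sub aI.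
  by move=> j /(fsubsetP AI) /hN.
rewrite -(gmul_theta iI) hm; first last.
- by apply: hsub; apply: fsubD1set.
- by apply: in_lam_scale; apply: hsub; rewrite fsub1set.
rewrite gmul0 hodd ?mul0r //.
  by apply: in_lam_scale; apply: hsub; rewrite fsub1set.
move=> K oK; rewrite /gscale /theta; case: ifP => [/eqP e|]; last by rewrite mulr0.
by move: oK; rewrite e cardfs1.
Qed.

End G.

Section F.
Variables (R : TopComRing.type) (E0 E1 : TopLmod.type R).
Local Notation El := (Eel E0 E1).

Lemma sbound_ok (x : El) : (exists N, bounded_by N x) -> bounded_by (sbound x) x.
Proof. by move=> h; rewrite /sbound; exact: (@xgetPex _ 0%N [set N | bounded_by N x] h). Qed.

Lemma Emap_diag phi (c : {fset nat} -> R) (x : El) :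
  (forall I J, phi (theta R I) J = if J == I then c J else 0) ->
  (exists N, bounded_by N x) -> Emap phi x = fun J => c J *: x J.
Proof.
move=> hphi /sbound_ok hB; apply/funext => J; rewrite /Emap.
rewrite (sum_single (a := J)) ?fset_uniq //; last first.
  by move=> C _ CJ; rewrite hphi eq_sym (negbTE CJ) scale0r.
rewrite hphi eqxx; case: ifP => // JP.
have -> : x J = 0; last by rewrite scaler0.
apply/eqP; apply: contraFT JP => xJ; rewrite fpowersetE; apply/fsubsetP => i iJ.
by rewrite seq_fsetE mem_iota add0n; apply: hB xJ _ iJ.
Qed.


Lemma Eeps_E (x : El) : (exists N, bounded_by N x) ->
  Eeps x = fun J => (if J == fset0 then 1 else 0) *: x J.
Proof.
apply: Emap_diag => I J; rewrite /eps /theta.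
by case: (J =P fset0) => [->|]; [|case: ifP].
Qed.

Lemma Emap_idE (x : El) : (exists N, bounded_by N x) -> Emap id x = x.
Proof.
move=> h; rewrite (@Emap_diag id (fun _ => 1)) //; first by apply/funext => J; rewrite scale1r.
Qed.

Lemma Emap_phitE t (x : El) : (exists N, bounded_by N x) ->
  Emap (phit t) x = fun J => t ^+ #|` J| *: x J.
Proof.
apply: Emap_diag => I J; rewrite /phit /theta.
by case: ifP; rewrite ?mulr1 ?mulr0.
Qed.

Lemma sum_supp mu (s : seq {fset nat}) (F : {fset nat} -> El) :
  (forall I, I \in s -> supported_in mu (F I)) ->
  supported_in mu (fun J => \sum_(I <- s) F I J).
Proof.
elim: s => [|a s IH] H.
  split; first by exists 0%N => K; rewrite big_nil eqxx.
  by move=> K; rewrite big_nil eqxx.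
have [[Na hNa] hAa] := H a (mem_head _ _).
have [[Ns hNs] hAs] := IH (fun I Is => H I (@mem_behead _ (a :: s) I Is)).
split.
  exists (maxn Na Ns) => K; rewrite big_cons => hK i iK.
  have [hz|hz] := eqVneq (F a K) 0.
    move: hK; rewrite hz add0r => hK; apply: leq_trans (hNs _ hK _ iK) _; exact: leq_maxr.
  apply: leq_trans (hNa _ hz _ iK) _; exact: leq_maxl.
move=> K; rewrite big_cons => hK.
have [hz|hz] := eqVneq (F a K) 0; last exact: hAa.
by move: hK; rewrite hz add0r; apply: hAs.
Qed.


Lemma theta_even (I : {fset nat}) : ~~ odd #|` I| -> even_el (theta R I).
Proof. by move=> eI K oK; rewrite /theta; case: ifP => // /eqP e; move: oK; rewrite e (negbTE eI). Qed.

Lemma theta_odd (I : {fset nat}) : odd #|` I| -> odd_el (theta R I).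
Proof. by move=> eI K oK; rewrite /theta; case: ifP => // /eqP e; move: oK; rewrite e eI. Qed.

Lemma Emap_Eobj mu mu' phi (x : El) : is_morph mu mu' phi ->
  Eobj mu x -> Eobj mu' (Emap phi x).
Proof.
move=> hphi [[hb hA] hpar]; have hB := sbound_ok hb.
have [hl _ _ _ [hev hod]] := hphi.
have thl : forall I, x I != 0 -> in_lam mu (theta R I).
  move=> I xI; apply: (@in_lam_theta R mu I (sbound x)); first exact: hA.
  by move=> i; apply: hB.
split.
  apply: sum_supp => I _; have [xI|xI] := eqVneq (x I) 0.
    split; first by exists 0%N => K; rewrite xI scaler0 eqxx.
    by move=> K; rewrite xI scaler0 eqxx.
  have [[N' hN'] hA'] := hl _ (thl _ xI).
  split.
    exists N' => K hK; apply: hN'; apply/eqP => e; move: hK; by rewrite e scale0r eqxx.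
  move=> K hK; apply: hA'; apply/eqP => e; move: hK; by rewrite e scale0r eqxx.
move=> J; pose P := (fun v : (E0 * E1)%type => if odd #|` J| then v.1 = 0 else v.2 = 0).
suff : P (Emap phi x J) by [].
rewrite /Emap; apply: big_ind.
- by rewrite /P; case: ifP.
- by rewrite /P => u v; case: ifP => _ /= -> ->; rewrite addr0.
move=> I _; rewrite /P; have [xI|xI] := eqVneq (x I) 0; first by rewrite xI scaler0; case: ifP.
have := hpar I; case: ifP => oI; case: ifP => oJ /= h.
- by rewrite h scaler0.
- by rewrite (hod _ (thl _ xI) (theta_odd oI)) ?oJ // scale0r.
- by rewrite (hev _ (thl _ xI) (theta_even (negbT oI))) // scale0r.
- by rewrite h scaler0.
Qed.


Lemma Eeps_Emap mu mu' phi (x : El) : is_morph mu mu' phi ->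
  Eobj mu x -> Eeps (Emap phi x) = Eeps x.
Proof.
move=> hphi hx; have [[hb' _] _] := Emap_Eobj hphi hx.
have [[hb hA] _] := hx; have hB := sbound_ok hb.
rewrite (Eeps_E hb') (Eeps_E hb); apply/funext => J.
case: ifP => [/eqP->|]; last by rewrite !scale0r.
congr (_ *: _); rewrite /Emap (sum_single (a := fset0)) ?fset_uniq //.
  rewrite fpowersetE fsub0set (eps_phi_theta (N := 0%N) hphi) ?eqxx ?scale1r //.
  by case: mu {hphi hx hA} => [n|] //= i; rewrite in_fset0.
move=> C _ C0; have [xC|xC] := eqVneq (x C) 0; first by rewrite xC scaler0.
rewrite (eps_phi_theta (N := sbound x) hphi) ?(negbTE C0) ?scale0r //.
  exact: hA.
by move=> i; apply: hB.
Qed.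


Lemma pow_cont (hR : topological_ring R) k (t0 : R) :
  (fun t : R => t ^+ k) @ t0 --> t0 ^+ k.
Proof.
elim: k => [|k IH]; first exact: cvg_cst.
have e : (fun t : R => t ^+ k.+1) = (fun t => t * t ^+ k).
  by apply/funext => t; rewrite exprS.
rewrite e exprS; have [_ _ hm] := hR.
apply: (@continuous2_cvg _ R R R _ _ id (fun t => t ^+ k) *%R) => //.
exact: (hm (t0, t0 ^+ k)).
Qed.

Lemma scal_cont (hR : topological_ring R) (M : TopLmod.type R)
  (hM : topological_module M) (v : M) k (t0 : R) :
  (fun t : R => t ^+ k *: v) @ t0 --> t0 ^+ k *: v.
Proof.
have [_ hs] := hM.
apply: (@continuous2_cvg _ R M M _ _ (fun t => t ^+ k) (fun _ => v) *:%R).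
- exact: (hs (t0 ^+ k, v)).
- exact: pow_cont.
- exact: cvg_cst.
Qed.


Lemma scal2_cont (hR : topological_ring R) (hE0 : topological_module E0)
  (hE1 : topological_module E1) (v : (E0 * E1)%type) k (t0 : R) :
  (fun t : R => t ^+ k *: v) @ t0 --> t0 ^+ k *: v.
Proof.
case: v => a b.
have := (cvg_pair (scal_cont hR hE0 (v:=a) (k:=k) (t0:=t0)) (scal_cont hR hE1 (v:=b) (k:=k) (t0:=t0))).
by move=> h; apply: h; apply: nbhs_filter.
Qed.


Lemma scale_tens mu (x : El) (c : {fset nat} -> R) :
  Etens mu x -> Etens mu (fun J => c J *: x J).
Proof.
move=> [[N hN] hA]; split.
  exists N => K hK; apply: hN; apply/eqP => e; move: hK; by rewrite e scaler0 eqxx.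
move=> K hK; apply: hA; apply/eqP => e; move: hK; by rewrite e scaler0 eqxx.
Qed.

Lemma adm_P N (I : {fset nat}) :
  adm (Some N) I <-> I \in fpowerset (seq_fset tt (iota 0 N)).
Proof.
rewrite fpowersetE; split.
  by move=> h; apply/fsubsetP => i iI; rewrite seq_fsetE mem_iota add0n h.
by move/fsubsetP => h i /h; rewrite seq_fsetE mem_iota add0n.
Qed.

Lemma near_open (hR : topological_ring R) (hE0 : topological_module E0)
  (hE1 : topological_module E1) N (A : set El) (x : El) :
  open_tensN N A -> Etens (Some N) x ->
  A (fun J => 0 ^+ #|` J| *: x J) ->
  nbhs (0 : R) [set t | A (fun J => t ^+ #|` J| *: x J)].
Proof.
move=> [_ hA] hx hA0; have [W [hW hWA]] := hA _ hA0.
set P := fpowerset (seq_fset tt (iota 0 N)).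
have key : nbhs (0 : R) (\bigcap_(I in [set` P]) [set t | W I (t ^+ #|` I| *: x I)]).
  apply: filter_bigI => I IP.
  have [oW W0] := hW I (proj2 (adm_P N I) IP).
  apply: (scal2_cont hR hE0 hE1 (v := x I) (k := #|` I|) (t0 := 0)).
  exact: open_nbhs_nbhs.
apply: filterS key => t ht; apply: hWA; first exact: scale_tens.
by move=> I /adm_P IP; apply: ht.
Qed.


Lemma adm_fset0 mu : adm mu fset0.
Proof. by case: mu => [n|] //= i; rewrite in_fset0. Qed.

Lemma adm0 (J : {fset nat}) : adm (Some 0%N) J -> J = fset0.
Proof.
move=> h; apply/eqP; apply: contraT => /fset0Pn [i iJ].
by have := h i iJ.
Qed.

Lemma Eeps_fset0 (x : El) : (exists N, bounded_by N x) -> Eeps x fset0 = x fset0.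
Proof. by move=> h; rewrite (Eeps_E h) eqxx scale1r. Qed.

Lemma Eeps_tens0 (x : El) : (exists N, bounded_by N x) -> Etens (Some 0%N) (Eeps x).
Proof.
move=> h; rewrite (Eeps_E h); split.
  exists 0%N => K; case: ifP => [/eqP -> _ i|]; by rewrite ?in_fset0 ?scale0r ?eqxx.
move=> K; case: ifP => [/eqP -> _|]; by rewrite ?adm_fset0 ?scale0r ?eqxx.
Qed.

Lemma Eobj0_fix (z : El) : Eobj (Some 0%N) z -> Eeps z = z.
Proof.
move=> [[hb hA] _]; rewrite (Eeps_E hb); apply/funext => J.
case: ifP => [_|/negbT JN]; first by rewrite scale1r.
rewrite scale0r; apply/esym/eqP; apply: contraT => /hA /adm0 /eqP.
by rewrite (negbTE JN).
Qed.

Lemma K1 (F : obj -> set El) lam : subfunctor F ->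
  @Eeps R E0 E1 @` F lam = F (Some 0%N).
Proof.
move=> [hF1 hF2]; apply/seteqP; split.
  by move=> _ [x Fx <-]; exact: (hF2 lam (Some 0%N) _ (morph_eps R lam) x Fx).
move=> z Fz; have Ez := hF1 _ _ Fz; have [[hb _] _] := Ez.
exists z; last exact: Eobj0_fix.
have := hF2 _ lam _ (morph_id R lam) z Fz.
by rewrite Emap_idE.
Qed.

Lemma tensN_pre N (A0 : set El) : open_tensN 0%N A0 ->
  open_tensN N [set x | Etens (Some N) x /\ A0 (Eeps x)].
Proof.
move=> hA0; split; first by move=> x [].
move=> x [hx hA]; have [W0 [hW0 hWA0]] := hA0.2 _ hA.
exists (fun I => if I == fset0 then W0 fset0 else setT); split.
  move=> I aI; case: ifP => [/eqP ->|_]; last by split; [exact: openT|].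
  have [o w] := hW0 fset0 (adm_fset0 _); split => //.
  by rewrite -(Eeps_fset0 hx.1).
move=> y hy hyW; split => //; apply: hWA0; first exact: Eeps_tens0 hy.1.
move=> I /adm0 ->; rewrite (Eeps_fset0 hy.1).
exact: (hyW fset0 (adm_fset0 _)).
Qed.

Lemma Esub_open (V : set El) : open_E (Some 0%N) V -> forall mu, open_E mu (Esub V mu).
Proof.
move=> [A0 [hA0 ->]] mu.
have hE : forall x : El, Eobj mu x -> Eobj (Some 0%N) (Eeps x).
  by move=> x hx; exact: (Emap_Eobj (morph_eps R mu) hx).
exists [set x | Etens mu x /\ A0 (Eeps x)]; split; last first.
  apply/seteqP; split => x /=.
    by move=> [Ex [Ax _]]; split => //; split => //; case: Ex.
  by move=> [[_ Ax] Ex]; split => //; split => //; apply: hE.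
case: mu hE => [N|] hE; first exact: tensN_pre.
split; first by move=> x [].
move=> N; have -> : [set x | Etens None x /\ A0 (Eeps x)] `&` Etens (Some N) =
    [set x | Etens (Some N) x /\ A0 (Eeps x)].
  apply/seteqP; split => x /=; first by move=> [[_ ?] ?].
  by move=> [[hb hA] ?]; split => //; split => //; split.
exact: tensN_pre.
Qed.


Lemma K2 (hR : topological_ring R) (dense_units : closure (@units_of R) = setT)
  (hE0 : topological_module E0) (hE1 : topological_module E1)
  (F : obj -> set El) : open_subfunctor F ->
  forall mu, F mu = Esub (F (Some 0%N)) mu.
Proof.
move=> [[hF1 hF2] hop] mu; apply/seteqP; split.
  move=> x Fx; split; first exact: hF1.
  exact: (hF2 mu (Some 0%N) _ (morph_eps R mu) x Fx).
move=> x [Ex Fe].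
have hb : exists N, bounded_by N x by case: Ex => [[]].
pose g (t : R) : El := fun J => t ^+ #|` J| *: x J.
have gE : forall t, g t = Emap (phit t) x by move=> t; rewrite Emap_phitE.
have gEobj : forall t, Eobj mu (g t).
  by move=> t; rewrite gE; exact: (Emap_Eobj (morph_phit mu t) Ex).
have Fg0 : F mu (g 0).
  have -> : g 0 = Eeps x.
    rewrite (Eeps_E hb); apply/funext => J; rewrite /g expr0n cardfs_eq0.
    by case: ifP.
  have [[hb' _] _] := Emap_Eobj (morph_eps R mu) Ex.
  have := hF2 _ mu _ (morph_id R mu) _ Fe.
  by rewrite Emap_idE.
have [A [hA hFA]] := hop mu.
have nb : nbhs (0 : R) [set t | A (g t)].
  have Ag0 : A (g 0) by move: Fg0; rewrite hFA => -[].
  case: mu {hF1 hF2 hop} Ex Fe gEobj Fg0 hA hFA Ag0 => [N|] Ex Fe gEobj Fg0 hA hFA Ag0.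
    exact: (near_open hR hE0 hE1 hA Ex.1 Ag0).
  have [hAT hAN] := hA.
  have hxN : Etens (Some (sbound x)) x.
    split; first by exists (sbound x); apply: sbound_ok.
    by move=> I xI i; apply: (sbound_ok hb).
  apply: filterS (near_open hR hE0 hE1 (hAN (sbound x)) hxN _) => [t [] //|].
  split => //; rewrite /g; apply: scale_tens hxN.
have : closure (@units_of R) 0 by rewrite dense_units.
move=> /(_ _ nb) [t [[v tv] Agt]].
have Fgt : F mu (g t) by rewrite hFA; split => //.
have := hF2 _ mu _ (morph_phit mu v) _ Fgt.
have [[hbt _] _] := gEobj t.
rewrite Emap_phitE //.
have -> : (fun J => v ^+ #|` J| *: g t J) = x; last by [].
apply/funext => J; rewrite /g scalerA -exprMn mulrC tv expr1n scale1r //.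
Qed.

End F.

Theorem proposition2p8
  (R : TopComRing.type)
  (hR : topological_ring R) (hausR : hausdorff_space R)
  (dense_units : closure (@units_of R) = setT)
  (E0 E1 : TopLmod.type R)
  (hE0 : topological_module E0) (hE1 : topological_module E1)
  (haus0 : hausdorff_space E0) (haus1 : hausdorff_space E1)
  (lam : obj) (U : set (Eel E0 E1)) (hU : U `<=` @Eobj R E0 E1 lam) :
  ((exists F : obj -> set (Eel E0 E1), @open_subfunctor R E0 E1 F /\ F lam = U)
     <-> @dewitt_open R E0 E1 lam U)
  /\ (forall F1 F2 : obj -> set (Eel E0 E1),
        @open_subfunctor R E0 E1 F1 -> F1 lam = U ->
        @open_subfunctor R E0 E1 F2 -> F2 lam = U -> F1 = F2)
  /\ (forall F : obj -> set (Eel E0 E1),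
        @open_subfunctor R E0 E1 F -> F lam = U ->
        F = @Esub R E0 E1 (@Eeps R E0 E1 @` U) /\ @Eeps R E0 E1 @` U = F (Some 0%N)).
Proof.
have hc : forall F : obj -> set (Eel E0 E1),
        @open_subfunctor R E0 E1 F -> F lam = U ->
        F = @Esub R E0 E1 (@Eeps R E0 E1 @` U) /\ @Eeps R E0 E1 @` U = F (Some 0%N).
  move=> F hF FU; have e1 := K1 lam hF.1; rewrite FU in e1.
  split => //; apply/funext => mu; by rewrite (K2 hR dense_units hE0 hE1 hF mu) e1.
split; [split|split => //].
- move=> [F [hF <-]]; exists (F (Some 0%N)); split; first exact: hF.2.
  by rewrite (K2 hR dense_units hE0 hE1 hF lam).
- move=> [V [hV ->]]; exists (Esub V); split => //; split; last exact: Esub_open.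
  split; first by move=> mu x [].
  move=> mu mu' phi hphi x [Ex Vx]; split; first exact: Emap_Eobj hphi Ex.
  by rewrite /preimage /= (Eeps_Emap hphi Ex).
move=> F1 F2 h1 e1 h2 e2; by rewrite (hc F1 h1 e1).1 (hc F2 h2 e2).1.
Qed.
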